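(* Let $m\ge 1$ be an integer and let $G^m$ be the graph obtained as follows: take $m$ disjoint copies $F_1,\dots,F_m$ of the graph $F$, denoting by $x_s,x'_s$ the copies of $x,x'$ in $F_s$; for $s=1,\dots,m-1$ identify $x'_s$ with $x_{s+1}$ and call the resulting vertex $w_{s+1}$; finally identify $x_1$ with $x'_m$ and call the resulting vertex $w_1$. Then $G^m$ has an acyclic $(\mathcal{S}_3,\mathcal{S}_3)$-colouring, and in every acyclic $(\mathcal{S}_3,\mathcal{S}_3)$-colouring of $G^m$ the vertices $w_1,\dots,w_m$ all have the same colour and each $w_s$ is $3$-saturated.
   Context: $F$ is the graph with vertex set $\{a,b,c,d,e,g,h,i,x,x'\}$ and edge set $\{de,\ da,\ ae,\ dc,\ ec,\ ac,\ eg,\ cg,\ db,\ ab,\ cb,\ gb,\ ex',\ bx',\ di,\ ix,\ ah,\ hx\}$. An acyclic $(\mathcal{S}_3,\mathcal{S}_3)$-colouring of a graph $G$ is a map $c:V(G)\to\{1,2\}$ (not necessarily proper) such that each of the two colour classes induces a subgraph of maximum degree at most $3$, and there is no cycle in $G$ every edge of which joins a vertex of colour $1$ to a vertex of colour $2$. A vertex $v$ is $3$-saturated if exactly $3$ of its neighbours have colour $c(v)$. *)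

(* Defs.v *)
From mathcomp Require Import all_boot.
Set Implicit Arguments. Unset Strict Implicit. Unset Printing Implicit Defensive.

(* Vertices of F encoded as 'I_10:
   a=0, b=1, c=2, d=3, e=4, g=5, h=6, i=7, x=8, x'=9. *)
Definition F_edges : seq (nat * nat) :=
  [:: (3,4); (3,0); (0,4); (3,2); (4,2); (0,2); (4,5); (2,5); (3,1); (0,1);
      (2,1); (5,1); (4,9); (1,9); (3,7); (7,8); (0,6); (6,8)].

Definition F_adj (u v : 'I_10) : bool :=
  ((val u, val v) \in F_edges) || ((val v, val u) \in F_edges).

(* Vertices of G^m: the 8 non-identified vertices a..i of each copy F_s
   (s : 'I_m), plus the identified vertices w_s (s : 'I_m).
   Copy s (0-based) has x_s = w_s and x'_s = w_{s+1 mod m}. *)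
Definition Gvert (m : nat) := (('I_m * 'I_8) + 'I_m)%type.

Definition w (m : nat) (s : 'I_m) : Gvert m := inr s.

Definition phi (m : nat) (s : 'I_m) (f : 'I_10) : Gvert m :=
  if val f == 8 then inr s
  else if val f == 9 then inr (ordS s)
  else inl (s, inord (val f)).

Definition Gadj (m : nat) (u v : Gvert m) : bool :=
  [exists s : 'I_m, exists f1 : 'I_10, exists f2 : 'I_10,
     [&& F_adj f1 f2, phi s f1 == u & phi s f2 == v]].

Definition same_col_nbrs (T : finType) (adj : rel T) (c : T -> bool) (v : T) :=
  #|[set u | adj v u && (c u == c v)]|.

Definition has_cycle (T : finType) (r : rel T) : Prop :=
  exists p : seq T, [/\ 3 <= size p, uniq p & cycle r p].

Definition acyclic_S3S3_colouring (T : finType) (adj : rel T) (c : T -> bool) : Prop :=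
  (forall v, same_col_nbrs adj c v <= 3) /\
  ~ has_cycle [rel u v | adj u v && (c u != c v)].

Definition saturated3 (T : finType) (adj : rel T) (c : T -> bool) (v : T) : Prop :=
  same_col_nbrs adj c v = 3.

(* Main.v *)
Require Import Defs.
From mathcomp Require Import all_boot zify.
From Stdlib Require Import FunctionalExtensionality.
Set Implicit Arguments. Unset Strict Implicit. Unset Printing Implicit Defensive.

Notation "''o' k" := (@Ordinal 10 k isT) (at level 0, k at level 0, format "''o' k").

Definition ords10 : seq 'I_10 := [:: 'o0; 'o1; 'o2; 'o3; 'o4; 'o5; 'o6; 'o7; 'o8; 'o9].
Definition ords8 : seq 'I_10 := [:: 'o0; 'o1; 'o2; 'o3; 'o4; 'o5; 'o6; 'o7].

Definition cycs : seq (seq 'I_10) :=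
 [:: [:: 'o0;'o1;'o3;'o4]; [:: 'o0;'o3;'o2;'o4]; [:: 'o0;'o2;'o4;'o3]; [:: 'o0;'o4;'o5;'o2];
     [:: 'o2;'o3;'o4;'o5]; [:: 'o0;'o1;'o3;'o2]; [:: 'o0;'o2;'o3;'o4]; [:: 'o0;'o1;'o2;'o3];
     [:: 'o0;'o3;'o1;'o2]; [:: 'o1;'o5;'o4;'o2]; [:: 'o1;'o9;'o4;'o2];
     [:: 'o0;'o6;'o8;'o7;'o3;'o4]; [:: 'o0;'o6;'o8;'o7;'o3;'o1]].

Definition bich (col : 'I_10 -> bool) : rel 'I_10 :=
  fun u v => F_adj u v && (col u != col v).

Definition lok (col : 'I_10 -> bool) : bool :=
  all (fun v => count (fun u => F_adj v u && (col u == col v)) ords10 <= 3) ords8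
  && all (fun q => ~~ cycle (bich col) q) cycs.

Definition lconc (col : 'I_10 -> bool) : bool :=
  [&& col 'o8 == col 'o9, col 'o6 == col 'o8, col 'o7 == col 'o8
   & (col 'o4 == col 'o9) || (col 'o1 == col 'o9)].

Definition nthcol (bs : seq bool) : 'I_10 -> bool := fun f => nth false bs f.

Lemma check_all b0 b1 b2 b3 b4 b5 b6 b7 b8 b9 :
  lok (nthcol [:: b0;b1;b2;b3;b4;b5;b6;b7;b8;b9]) ==>
  lconc (nthcol [:: b0;b1;b2;b3;b4;b5;b6;b7;b8;b9]).
Proof.
move: b0 b1 b2 b3 b4 b5 b6 b7 b8 b9; do 10 case.
all: vm_compute; reflexivity.
Qed.

Lemma nocycle (T : finType) (r : rel T) (rk : T -> nat) :
  symmetric r ->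
  (forall v u1 u2, r v u1 -> r v u2 -> rk v <= rk u1 -> rk v <= rk u2 -> u1 = u2) ->
  ~ has_cycle r.
Proof.
move=> sym cert [p [sz up cp]].
have ex : exists n, has (fun v => rk v == n) p.
  case: p sz {up cp} => // x p _; exists (rk x); by rewrite /= eqxx.
case: (ex_minnP ex) => n /hasP [v vp /eqP rkv] minn.
have low : forall u, u \in p -> rk v <= rk u.
  move=> u up'; rewrite rkv; apply: minn; apply/hasP; exists u => //.
case: (rot_to vp) => i q eqr.
have uq : uniq (v :: q) by rewrite -eqr rot_uniq.
have cq : cycle r (v :: q) by rewrite -eqr rot_cycle.
have sq : 3 <= size (v :: q) by rewrite -eqr size_rot.
have memq : forall u, u \in q -> u \in p.
  move=> u uq'; rewrite -(mem_rot i) eqr inE uq' orbT //.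
case: q eqr uq cq sq memq => [|y q'] // eqr uq cq sq memq.
case: q' eqr uq cq sq memq => [|y' q''] // eqr uq cq sq memq.
set q' := y' :: q'' in uq cq memq.
move: cq; rewrite /cycle rcons_path => /andP [/andP [rvy _] rzv].
have ez : last y q' \in q' by rewrite /q' /= mem_last.
have hy : y = last y q'.
  apply: (cert v).
  - exact: rvy.
  - by rewrite sym.
  - by apply: low; apply: memq; rewrite inE eqxx.
  - by apply: low; apply: memq; rewrite inE ez orbT.
move: uq; rewrite /= => /andP [_ /andP [/negP yq _]]; apply: yq; by rewrite {1}hy.
Qed.

Lemma phi_inl m (t s : 'I_m) (f1 : 'I_10) (f : 'I_8) :
  phi t f1 = inl (s, f) -> t = s /\ val f1 = val f.
Proof.
rewrite /phi; case: eqP => // h8; case: eqP => // h9 [<- <-]; split => //.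
rewrite /= inordK //; have := ltn_ord f1; move: h8 h9; case: f1 => k hk /=; lia.
Qed.

Lemma phi_inr m (t s : 'I_m) (f1 : 'I_10) :
  phi t f1 = inr s -> (f1 = 'o8 /\ t = s) \/ (f1 = 'o9 /\ t = ord_pred s).
Proof.
rewrite /phi; case: eqP => h8.
  by case=> <-; left; split => //; apply: val_inj.
case: eqP => // h9 [<-]; right; split; first by apply: val_inj.
by rewrite ordSK.
Qed.

Lemma phi_eq m (s : 'I_m) (u1 u2 : 'I_10) :
  phi s u1 = phi s u2 -> u1 = u2 \/ (u1 = 'o8 /\ u2 = 'o9) \/ (u1 = 'o9 /\ u2 = 'o8).
Proof.
have l8 : forall u : 'I_10, val u = 8 -> u = 'o8 by move=> u h; apply: val_inj.
have l9 : forall u : 'I_10, val u = 9 -> u = 'o9 by move=> u h; apply: val_inj.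
rewrite /phi.
have [a8|a8] := eqVneq (val u1) 8; have [b8|b8] := eqVneq (val u2) 8;
  have [a9|a9] := eqVneq (val u1) 9; have [b9|b9] := eqVneq (val u2) 9;
  rewrite ?a8 ?b8 ?a9 ?b9 //=; try (by move: a8 a9; lia); try (by move: b8 b9; lia).
- by left; apply: val_inj; rewrite a8 b8.
- by right; left; split; [exact: l8|exact: l9].
- by right; right; split; [exact: l9|exact: l8].
- by left; apply: val_inj; rewrite a9 b9.
- case=> /(congr1 val); rewrite /= !inordK => [e||].
  + by left; apply: val_inj.
  + by move: b8 b9 (ltn_ord u2) => /= /eqP ? /eqP ? ?; lia.
  + by move: a8 a9 (ltn_ord u1) => /= /eqP ? /eqP ? ?; lia.
Qed.

Lemma Gadj_phi m (s : 'I_m) f1 f2 : F_adj f1 f2 -> Gadj (phi s f1) (phi s f2).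
Proof.
move=> h; apply/existsP; exists s; apply/existsP; exists f1; apply/existsP; exists f2.
by rewrite h !eqxx.
Qed.

Lemma GadjP m (u v : Gvert m) : Gadj u v ->
  exists t f1 f2, [/\ F_adj f1 f2, phi t f1 = u & phi t f2 = v].
Proof.
move=> /existsP [t /existsP [f1 /existsP [f2 /and3P [h /eqP e1 /eqP e2]]]].
by exists t, f1, f2.
Qed.

Lemma F_adj_sym : symmetric F_adj.
Proof. by move=> u v; rewrite /F_adj orbC. Qed.

Lemma Gadj_sym m : symmetric (@Gadj m).
Proof.
move=> u v; apply/idP/idP => /GadjP [t [f1 [f2 [h <- <-]]]];
  by apply: Gadj_phi; rewrite F_adj_sym.
Qed.

Lemma mem_ords10 (v : 'I_10) : v \in ords10.
Proof. by case: v => [[|[|[|[|[|[|[|[|[|[|k]]]]]]]]]] hk]. Qed.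

Lemma mem_ords8 (v : 'I_10) : val v < 8 -> v \in ords8.
Proof. by case: v => [[|[|[|[|[|[|[|[|[|[|k]]]]]]]]]] hk]. Qed.

Lemma enum_I10 : enum 'I_10 = ords10.
Proof. apply: (inj_map val_inj); by rewrite val_enum_ord. Qed.

Lemma card_count (P : pred 'I_10) : #|[set u | P u]| = count P ords10.
Proof. by rewrite cardsE cardE /enum_mem -enumT enum_I10 size_filter. Qed.

Lemma lcheck (col : 'I_10 -> bool) : lok col -> lconc col.
Proof.
have -> : col = nthcol [:: col 'o0; col 'o1; col 'o2; col 'o3; col 'o4;
                           col 'o5; col 'o6; col 'o7; col 'o8; col 'o9].
  apply: functional_extensionality => -[k hk]; rewrite /nthcol /=.
  do 10 (case: k hk => [|k] hk; first by congr col; apply: val_inj).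
  by [].
move=> h; by have /implyP := check_all (col 'o0) (col 'o1) (col 'o2) (col 'o3) (col 'o4)
   (col 'o5) (col 'o6) (col 'o7) (col 'o8) (col 'o9); apply.
Qed.

Lemma no89 : all (fun v => ~~ (F_adj v 'o8 && F_adj v 'o9)) ords10.
Proof. by vm_compute. Qed.

Lemma cycs_ok : all (fun q => [&& uniq q, 3 <= size q & ~~ (('o8 \in q) && ('o9 \in q))]) cycs.
Proof. by vm_compute. Qed.

Lemma local_ok m (c : Gvert m -> bool) (s : 'I_m) :
  acyclic_S3S3_colouring (@Gadj m) c -> lok (fun f => c (phi s f)).
Proof.
move=> [deg acyc]; apply/andP; split.
- apply/allP => v _; rewrite -card_count.
  apply: leq_trans (deg (phi s v)); rewrite /same_col_nbrs.
  rewrite -(@card_in_imset _ _ (phi s)).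
    apply: subset_leq_card; apply/subsetP => u /imsetP [g gA ->].
    by move: gA; rewrite !inE => /andP [ha hc]; rewrite Gadj_phi.
  move=> u1 u2; rewrite !inE => /andP [h1 _] /andP [h2 _] /phi_eq [//|[[e1 e2]|[e1 e2]]].
  + by have := allP no89 v (mem_ords10 v); rewrite -e1 -e2 h1 h2.
  + by have := allP no89 v (mem_ords10 v); rewrite -e1 -e2 h1 h2.
- apply/allP => q qin; apply/negP => cq; apply: acyc.
  have /and3P [uq sq n89] := allP cycs_ok q qin.
  exists (map (phi s) q); split.
  + by rewrite size_map.
  + rewrite map_inj_in_uniq // => u1 u2 i1 i2 /phi_eq [//|[[e1 e2]|[e1 e2]]].
    * by move: n89; rewrite -e1 -e2 i1 i2.
    * by move: n89; rewrite -e1 -e2 i1 i2.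
  + rewrite cycle_map; apply: (sub_cycle _ cq) => u v /andP [ha hc] /=.
    by rewrite Gadj_phi.
Qed.

Lemma ordS_val n (t : 'I_n.+1) (k : nat) (hk : k < n.+1) :
  val t = k.+1 -> ordS (Ordinal hk) = t.
Proof. move=> e; apply: val_inj; rewrite /= -e modn_small //; exact: ltn_ord. Qed.

Lemma forall_part m (c : Gvert m -> bool) :
  acyclic_S3S3_colouring (@Gadj m) c ->
  (forall s t : 'I_m, c (w s) = c (w t)) /\
  (forall s : 'I_m, saturated3 (@Gadj m) c (w s)).
Proof.
move=> ac.
have L : forall s : 'I_m, lconc (fun f => c (phi s f)) by move=> s; apply: lcheck; apply: local_ok.
split.
- case: m c ac L => [|n] c ac L; first by case.
  have step : forall t : 'I_n.+1, c (inr t) = c (inr (ordS t)).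
    by move=> t; have /and4P [/eqP e _ _ _] := L t.
  have base : forall k (t : 'I_n.+1), val t = k -> c (inr t) = c (inr ord0).
    elim=> [|k IH] t et; first by congr (c (inr _)); apply: val_inj.
    have hk : k < n.+1 by apply: ltnW; rewrite -et ltn_ord.
    by rewrite -(ordS_val hk et) -step (IH (Ordinal hk)).
  by move=> s t; rewrite /w (base _ s erefl) (base _ t erefl).
- move=> s; rewrite /saturated3; apply/eqP; rewrite eqn_leq; apply/andP; split.
    by case: ac => deg _; apply: deg.
  set t := ord_pred s.
  have ts : ordS t = s by rewrite ord_predK.
  have /and4P [/eqP e89 /eqP e6 /eqP e7 h41] := L s.
  have /and4P [_ _ _ h41'] := L t.
  have ph9 : phi t 'o9 = w s by rewrite /phi /= ts.
  have ph8 : phi s 'o8 = w s by [].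
  have ne : forall (f g : 'I_10) (s1 s2 : 'I_m), val f < 8 -> val g < 8 ->
      val f != val g -> phi s1 f != phi s2 g.
    move=> f g s1 s2 hf hg hfg; rewrite /phi.
    have [f8|f8] := eqVneq (val f) 8; first by move: hf; rewrite f8.
    have [f9|f9] := eqVneq (val f) 9; first by move: hf; rewrite f9.
    have [g8|g8] := eqVneq (val g) 8; first by move: hg; rewrite g8.
    have [g9|g9] := eqVneq (val g) 9; first by move: hg; rewrite g9.
    apply/eqP; case=> _ /(congr1 val); rewrite /= !inordK //; apply/eqP; exact: hfg.
  have [y [yS yne6 yne7]] : exists y, [/\ y \in [set u | Gadj (w s) u && (c u == c (w s))],
      y != phi s 'o6 & y != phi s 'o7].
    case/orP: h41' => /eqP hy; [exists (phi t 'o4) | exists (phi t 'o1)];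
      (split; [rewrite inE -ph9 Gadj_phi //= hy ph9 //|apply: ne => //|apply: ne => //]).
  have u3 : uniq [:: phi s 'o6; phi s 'o7; y].
    by rewrite /= !inE negb_or ne //= eq_sym yne6 eq_sym yne7.
  rewrite /same_col_nbrs; apply: (@leq_trans #|[:: phi s 'o6; phi s 'o7; y]|).
    by rewrite (card_uniqP u3).
  apply: subset_leq_card; apply/subsetP => u; rewrite !inE => /or3P [] /eqP -> //.
  + by rewrite -ph8 Gadj_phi //= e6 ph8.
  + by rewrite -ph8 Gadj_phi //= e7 ph8.
  + by move: yS; rewrite inE.
Qed.

Definition col0 : 'I_10 -> bool :=
  nthcol [:: true;true;true;true;false;false;false;false;false;false].
Definition rk0 (f : 'I_10) : nat := nth 0 [:: 4;2;4;4;5;3;3;3;0;0] f.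

Definition c0 m (v : Gvert m) : bool :=
  match v with inl p => nth false [:: true;true;true;true] p.2 | inr _ => false end.
Definition rkG m (v : Gvert m) : nat :=
  match v with inl p => nth 0 [:: 4;2;4;4;5;3;3;3] p.2 | inr _ => 0 end.

Lemma phi_small m (t : 'I_m) (f : 'I_10) (hf : val f < 8) :
  phi t f = inl (t, inord (val f)).
Proof.
rewrite /phi; have [f8|f8] := eqVneq (val f) 8; first by move: hf; rewrite f8.
by have [f9|f9] := eqVneq (val f) 9; first by move: hf; rewrite f9.
Qed.

Lemma c0phi m (t : 'I_m) f : c0 (phi t f) = col0 f.
Proof.
have [hf|hf] := ltnP (val f) 8.
  rewrite phi_small //= inordK //; move: hf; rewrite /col0 /nthcol.
  by case: f => [[|[|[|[|[|[|[|[|k]]]]]]]] hk].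
rewrite /phi; case: f hf => [k hk] /= hf.
by case: eqP => [e|n8]; [rewrite /col0 /rk0 /nthcol /= e|case: eqP => [e|n9]; [rewrite /col0 /rk0 /nthcol /= e|move: hk hf n8 n9; lia]].
Qed.

Lemma rkphi m (t : 'I_m) f : rkG (phi t f) = rk0 f.
Proof.
have [hf|hf] := ltnP (val f) 8.
  rewrite phi_small //= inordK //; move: hf; rewrite /rk0.
  by case: f => [[|[|[|[|[|[|[|[|k]]]]]]]] hk].
rewrite /phi; case: f hf => [k hk] /= hf.
by case: eqP => [e|n8]; [rewrite /col0 /rk0 /nthcol /= e|case: eqP => [e|n9]; [rewrite /col0 /rk0 /nthcol /= e|move: hk hf n8 n9; lia]].
Qed.

Lemma deg0 : all (fun v => count (fun u => F_adj v u && (col0 u == col0 v)) ords10 <= 3) ords8.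
Proof. by vm_compute. Qed.
Lemma deg8 : count (fun u => F_adj 'o8 u && (col0 u == false)) ords10 = 2.
Proof. by vm_compute. Qed.
Lemma deg9 : count (fun u => F_adj 'o9 u && (col0 u == false)) ords10 = 1.
Proof. by vm_compute. Qed.
Lemma cert0 : all (fun f : 'I_10 => (val f < 8) ==> all (fun g1 : 'I_10 => all (fun g2 : 'I_10 =>
   [&& F_adj f g1, F_adj f g2, col0 f != col0 g1, col0 f != col0 g2,
       rk0 f <= rk0 g1 & rk0 f <= rk0 g2] ==> (g1 == g2)) ords10) ords10) ords10.
Proof. by vm_compute. Qed.
Lemma cert8 : all (fun g => F_adj 'o8 g ==> (col0 g == col0 'o8)) ords10.
Proof. by vm_compute. Qed.
Lemma cert9 : all (fun g => (F_adj 'o9 g && (col0 g != col0 'o9)) ==> (g == 'o1)) ords10.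
Proof. by vm_compute. Qed.

Lemma exist_part m : acyclic_S3S3_colouring (@Gadj m) (@c0 m).
Proof.
split.
- case=> [[s f]|s]; rewrite /same_col_nbrs.
  + set f' : 'I_10 := widen_ord (isT : 8 <= 10) f.
    have pf : phi s f' = inl (s, f).
      rewrite phi_small; last exact: ltn_ord f. apply: (congr1 (fun z => inl (s, z))). apply: val_inj; rewrite /= inordK //; exact: ltn_ord f.

    apply: (@leq_trans #|phi s @: [set u | F_adj f' u && (col0 u == col0 f')]|).
      apply: subset_leq_card; apply/subsetP => u; rewrite inE => /andP [].
      move=> /GadjP [t [f1 [f2 [h e1 <-]]]]; rewrite -pf !c0phi => hc.
      have [ets ef] := phi_inl e1; subst t.
      have ef1 : f1 = f' by apply: val_inj. subst f1.
      by apply/imsetP; exists f2 => //; rewrite inE h.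
    apply: leq_trans (leq_imset_card _ _) _; rewrite card_count.
    by apply: (allP deg0); apply: mem_ords8; rewrite /= ltn_ord.
  + apply: (@leq_trans #|phi s @: [set u | F_adj 'o8 u && (col0 u == false)]
                      :|: phi (ord_pred s) @: [set u | F_adj 'o9 u && (col0 u == false)]|).
      apply: subset_leq_card; apply/subsetP => u; rewrite inE => /andP [].
      move=> /GadjP [t [f1 [f2 [h e1 <-]]]]; rewrite c0phi /= => hc.
      case: (phi_inr e1) => [][ef et]; subst f1 t; rewrite inE; apply/orP; [left|right];
        by apply/imsetP; exists f2 => //; rewrite inE h.
    apply: leq_trans (leq_card_setU _ _) _.
    apply: leq_trans (leq_add (leq_imset_card _ _) (leq_imset_card _ _)) _.
    by rewrite !card_count deg8 deg9.
- apply: (@nocycle _ _ (@rkG m)).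
    by move=> u v /=; rewrite Gadj_sym eq_sym.
  move=> v u1 u2 /= /andP [/GadjP [t1 [f1 [g1 [h1 e1 <-]]]] hc1]
                  /andP [/GadjP [t2 [f2 [g2 [h2 e2 <-]]]] hc2].
  case: v e1 e2 hc1 hc2 => [[s f]|s] e1 e2 hc1 hc2.
  + have [ets1 ef1] := phi_inl e1; have [ets2 ef2] := phi_inl e2; subst t1 t2.
    have ef : f2 = f1 by apply: val_inj; rewrite ef1 ef2.
    subst f2; rewrite -e1 !rkphi !c0phi in hc1 hc2 * => r1 r2.
    have hf : val f1 < 8 by rewrite ef1 ltn_ord.
    have := allP cert0 f1 (mem_ords10 _); rewrite hf implyTb => A.
    have := allP A g1 (mem_ords10 _) => B.
    have := allP B g2 (mem_ords10 _); rewrite h1 h2 hc1 hc2 r1 r2 /=.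
    by move=> /eqP ->.
  + move=> _ _.
    have key : forall t f g, phi t f = inr s -> F_adj f g -> c0 (inr s) != c0 (phi t g) ->
        phi t g = phi (ord_pred s) 'o1.
      move=> t f g e h hc; rewrite -e !c0phi in hc.
      case: (phi_inr e) => [][ef et]; subst f t.
      * by have := allP cert8 g (mem_ords10 _); rewrite h eq_sym (negbTE hc).
      * have := allP cert9 g (mem_ords10 _); rewrite h eq_sym hc /= => /eqP -> //.
    by rewrite (key _ _ _ e1 h1 hc1) (key _ _ _ e2 h2 hc2).
Qed.

Unset Implicit Arguments.

Theorem mainTheorem9 (m : nat) (hm : 1 <= m) :
  (exists c : Gvert m -> bool, acyclic_S3S3_colouring (@Gadj m) c) /\
  (forall c : Gvert m -> bool, acyclic_S3S3_colouring (@Gadj m) c ->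
     (forall s t : 'I_m, c (w s) = c (w t)) /\
     (forall s : 'I_m, saturated3 (@Gadj m) c (w s))).
Proof.
split; first by exists (@c0 m); exact: exist_part.
exact: forall_part.
Qed.
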